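(* Let $x_1, x_2, \dots$ be a sequence of real observations and let $f_0(\cdot\mid\theta_0)$ and $f_1(\cdot\mid\theta_1)$ be probability densities that are strictly positive at every $x_k$. Put $\ell_k = \log \frac{f_1(x_k\mid\theta_1)}{f_0(x_k\mid\theta_0)}$. Define the CUSUM statistic recursively by $W_0 = 0$ and $W_n = \max(0, W_{n-1}) + \ell_n$ for $n \ge 1$. For $n\ge 0$, define the log generalized likelihood ratio statistic for a temporary change by $$G_n^{\ast} = \max_{0 \le \nu \le N \le n} \ \sum_{k=\nu+1}^{N} \ell_k ,$$ where an empty sum is $0$. Then $G_n^{\ast} = G_n$ for every $n \ge 0$, where $G_0 = 0$ and $G_n = \max(G_{n-1}, W_n)$ for $n \ge 1$.
   Context: The statistic $G_n^{\ast}$ is the logarithm of the generalized likelihood ratio for testing $\mathcal{H}_0$: $x_1,\dots,x_n$ are i.i.d. with density $f_0(\cdot\mid\theta_0)$, against $\mathcal{H}_1$: there exist unknown times $\nu \le N$ such that $x_k$ has density $f_1(\cdot\mid\theta_1)$ for $\nu < k \le N$ and density $f_0(\cdot\mid\theta_0)$ otherwise, all observations independent. The likelihood ratio of $\mathcal{H}_1$ with parameters $(\nu,N)$ to $\mathcal{H}_0$ is $\prod_{k=\nu+1}^{N} f_1(x_k\mid\theta_1)/f_0(x_k\mid\theta_0)$, and $G_n^{\ast}$ is the logarithm of its maximum over $(\nu,N)$. *)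

(* Defs.v *)
From Stdlib Require Import Reals.
Open Scope R_scope.

(* Partial sum  \sum_{k=a+1}^{b} l k  (empty, i.e. 0, when b <= a). *)
Fixpoint sum_range (l : nat -> R) (a b : nat) : R :=
  match b with
  | O => 0
  | S b' => if Nat.leb b a then 0 else sum_range l a b' + l b
  end.

Fixpoint max_upto (g : nat -> R) (m : nat) : R :=
  match m with
  | O => g O
  | S m' => Rmax (max_upto g m') (g m)
  end.

Definition llr {Theta : Type} (f0 f1 : Theta -> R -> R) (th0 th1 : Theta)
  (x : nat -> R) (k : nat) : R :=
  ln (f1 th1 (x k) / f0 th0 (x k)).

Fixpoint cusum (l : nat -> R) (n : nat) : R :=
  match n with
  | O => 0
  | S n' => Rmax 0 (cusum l n') + l n
  end.

Fixpoint Grec (l : nat -> R) (n : nat) : R :=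
  match n with
  | O => 0
  | S n' => Rmax (Grec l n') (cusum l n)
  end.

Definition Gstar (l : nat -> R) (n : nat) : R :=
  max_upto (fun N => max_upto (fun nu => sum_range l nu N) N) n.

(* Main.v *)
Require Import Defs.
From Stdlib Require Import Reals Lra Lia.
Open Scope R_scope.

Lemma rmax_plus a b c : Rmax (a + c) (b + c) = Rmax a b + c.
Proof. unfold Rmax; destruct (Rle_dec (a+c) (b+c)), (Rle_dec a b); lra. Qed.

Lemma max_upto_ext g h m : (forall i, (i <= m)%nat -> g i = h i) ->
  max_upto g m = max_upto h m.
Proof.
  induction m; intros H; simpl.
  - apply H; lia.
  - rewrite IHm by (intros; apply H; lia). rewrite (H (S m)) by lia. reflexivity.
Qed.

Lemma max_upto_plus g c m : max_upto (fun i => g i + c) m = max_upto g m + c.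
Proof. induction m; simpl; [reflexivity|]. rewrite IHm. apply rmax_plus. Qed.

Lemma sum_range_diag l a : sum_range l a a = 0.
Proof. destruct a; simpl; [reflexivity|]. rewrite Nat.leb_refl. reflexivity. Qed.

Lemma sum_range_S l nu N : (nu <= N)%nat -> sum_range l nu (S N) = sum_range l nu N + l (S N).
Proof. intros H. change (sum_range l nu (S N)) with
  (if Nat.leb (S N) nu then 0 else sum_range l nu N + l (S N)).
  replace (Nat.leb (S N) nu) with false; [reflexivity|].
  symmetry. apply Nat.leb_gt. lia. Qed.

Lemma inner_eq l N : max_upto (fun nu => sum_range l nu N) N = Rmax 0 (cusum l N).
Proof.
  induction N.
  - simpl. unfold Rmax; destruct (Rle_dec 0 0); lra.
  - change (max_upto (fun nu => sum_range l nu (S N)) (S N)) with (Rmax (max_upto (fun nu => sum_range l nu (S N)) N) (sum_range l (S N) (S N))). rewrite sum_range_diag.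
    rewrite (max_upto_ext _ (fun nu => sum_range l nu N + l (S N))) by (intros; apply sum_range_S; lia).
    rewrite max_upto_plus, IHN. simpl cusum.
    unfold Rmax at 1 3; destruct (Rle_dec _ 0), (Rle_dec 0 _); lra.
Qed.

Lemma Grec_ge0 l n : 0 <= Grec l n.
Proof. induction n; simpl; [lra|]. unfold Rmax; destruct (Rle_dec _ _); lra. Qed.

Lemma main l n : Gstar l n = Grec l n.
Proof.
  unfold Gstar. rewrite (max_upto_ext _ (fun N => Rmax 0 (cusum l N))) by (intros; apply inner_eq).
  induction n.
  - simpl. unfold Rmax; destruct (Rle_dec 0 0); lra.
  - change (max_upto (fun N => Rmax 0 (cusum l N)) (S n)) with (Rmax (max_upto (fun N => Rmax 0 (cusum l N)) n) (Rmax 0 (cusum l (S n)))). rewrite IHn. change (Grec l (S n)) with (Rmax (Grec l n) (cusum l (S n))). pose proof (Grec_ge0 l n).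
    unfold Rmax; destruct (Rle_dec 0 (cusum l (S n))), (Rle_dec (Grec l n) (cusum l (S n))), (Rle_dec (Grec l n) 0); lra.
Qed.

Theorem proposition1 (Theta : Type) (f0 f1 : Theta -> R -> R) (th0 th1 : Theta)
  (x : nat -> R)
  (hpos0 : forall k : nat, (1 <= k)%nat -> 0 < f0 th0 (x k))
  (hpos1 : forall k : nat, (1 <= k)%nat -> 0 < f1 th1 (x k)) :
  forall n : nat,
    Gstar (llr f0 f1 th0 th1 x) n = Grec (llr f0 f1 th0 th1 x) n.
Proof. intros n; apply main. Qed.
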